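(* Let $\mathcal X,\mathcal W$ be measurable spaces, $\mathcal Z=\mathcal X\times\mathcal W$, and let $(X,W,Y)\sim P_{X,W,Y}$ on $\mathcal X\times\mathcal W\times\mathbb R$ with $\mathbb E[Y^2]<\infty$; write $Z=(X,W)$. Let $n,m\ge1$, $N=n+m$, $\lambda\ge0$. Observe training data $\mathscr D$ consisting of $n$ i.i.d. labeled samples $(Z_i,Y_i)\sim P_{X,W,Y}$ and $m$ i.i.d. unlabeled samples $Z_j\sim P_{X,W}$, and let $(X,W)$ denote an independent test point. Let $\mathcal F\subset L^2(P_X)$, $\mathcal G\subset L^2(P_Z)$ be nonempty closed convex sets (functions on $\mathcal X$ identified with their lifts to $\mathcal Z$), define $$\mathcal{L}(f,g;\lambda)=\frac{n}{N}\mathbb{E}[(Y-f(X))^2]+\frac{m}{N}\mathbb{E}[(g(Z)-f(X))^2]+\lambda\frac{n}{N}\mathbb{E}[(Y-g(Z))^2],$$ and let $(f^\star,g^\star)\in\mathcal F\times\mathcal G$ be a minimizer of $\mathcal L(\cdot,\cdot;\lambda)$ over $\mathcal F\times\mathcal G$. Let $\mu(x)=\mathbb E[Y\mid X=x]$, $\eta(z)=\mathbb E[Y\mid Z=z]$, and assume $\mu\in\mathcal F$, $\mu\in\mathcal G$ and $\eta\in\mathcal G$. Then any estimator $(\hat f,\hat g)\in\mathcal F\times\mathcal G$ (constructed from $\mathscr D$) satisfies $$\mathbb{E}_{\mathscr{D},X}\left[(\hat f(X)-\mu(X))^2\right]\le\frac{\mathbb{E}_{\mathscr{D}}\left[\mathcal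 L(\hat f,\hat g;\lambda)-\mathcal L(f^\star,g^\star;\lambda)\right]}{\gamma_{n,m,\lambda}(\rho_\star)},$$ where $\gamma_{n,m,\lambda}(\rho_\star)=1-\frac{m^2}{N(m+n\lambda)}\rho_\star^2\ge\frac{n}{N}$.
   Context: Define the estimation errors $\hat e_f(X)=f^\star(X)-\hat f(X)$ and $\hat e_g(Z)=g^\star(Z)-\hat g(Z)$, and the correlation score $$\rho_\star=\frac{\big|\mathbb{E}_{\mathscr{D},Z}[\hat e_f(X)\hat e_g(Z)]\big|}{\big(\mathbb{E}_{\mathscr{D},X}[\hat e_f^2(X)]\big)^{1/2}\big(\mathbb{E}_{\mathscr{D},Z}[\hat e_g^2(Z)]\big)^{1/2}}\in[0,1],$$ with the convention $\rho_\star=0$ if either denominator factor is zero. Expectations $\mathbb E_{\mathscr D,\cdot}$ are over the training data and the independent test point; in $\mathbb E_{\mathscr D}[\mathcal L(\hat f,\hat g;\lambda)]$ the population loss is evaluated at the (data-dependent) functions and then averaged over $\mathscr D$. *)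

(* Defs.v *)
From HB Require Import structures.
From mathcomp Require Import all_boot all_order all_algebra.
From mathcomp Require Import all_classical all_reals all_analysis.
Set Implicit Arguments. Unset Strict Implicit. Unset Printing Implicit Defensive.
Import Order.TTheory GRing.Theory Num.Theory.
Local Open Scope classical_set_scope.
Local Open Scope ring_scope.

Definition events_of d (Om : measurableType d) dT (T : measurableType dT)
  (V : Om -> T) : set (set Om) := [set V @^-1` A | A in measurable].

Definition mutually_indep d (Om : measurableType d) (R : realType)
  (Q : probability Om R) (I : finType) (E : I -> set (set Om)) : Prop :=
  forall (J : {set I}) (B : I -> set Om),
    (forall i, i \in J -> E i (B i)) ->
    Q (\bigcap_(i in [set i | i \in J]) B i) = (\prod_(i in J) Q (B i))%E.

Definition same_law d1 d2 dT (O1 : measurableType d1) (O2 : measurableType d2)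
  (T : measurableType dT) (R : realType) (P1 : probability O1 R)
  (P2 : probability O2 R) (V1 : O1 -> T) (V2 : O2 -> T) : Prop :=
  forall A : set T, measurable A -> P1 (V1 @^-1` A) = P2 (V2 @^-1` A).

Local Open Scope ereal_scope.

Section Defs.
Context (R : realType) (d : measure_display) (Om : measurableType d)
  (P : probability Om R).

Definition sq_integrable (V : Om -> R) : Prop :=
  \int[P]_w ((V w) ^+ 2)%:E < +oo.

Context (dT : measure_display) (T : measurableType dT) (V : Om -> T).

(** [h] is (a representative of) an element of [L^2(P_V)], [P_V] the law of [V]. *)
Definition inL2 (h : T -> R) : Prop :=
  measurable_fun setT h /\ sq_integrable (h \o V).

Definition ae_eq_law (f h : T -> R) : Prop :=
  {ae P, forall w, f (V w) = h (V w)}.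

(** The [L^2(P_V)]-class of [h] belongs to (the set of classes of) [F]. *)
Definition L2mem (F : set (T -> R)) (h : T -> R) : Prop :=
  exists2 f, F f & ae_eq_law f h.

Definition subset_L2 (F : set (T -> R)) : Prop := forall f, F f -> inL2 f.

Definition closed_L2 (F : set (T -> R)) : Prop :=
  forall (fs : nat -> T -> R) (h : T -> R),
    (forall k, F (fs k)) -> inL2 h ->
    (fun k => \int[P]_w (((fs k (V w)) - h (V w)) ^+ 2)%:E) @ \oo --> 0 ->
    L2mem F h.

Definition convex_L2 (F : set (T -> R)) : Prop :=
  forall (f g : T -> R) (t : R), F f -> F g -> (0 <= t <= 1)%R ->
    L2mem F (fun x => t * f x + (1 - t) * g x)%R.

Definition is_cond_exp (Y : Om -> R) (mu : T -> R) : Prop :=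
  [/\ measurable_fun setT mu,
      P.-integrable setT (fun w => (mu (V w))%:E) &
      forall A : set T, measurable A ->
        \int[P]_(w in V @^-1` A) (Y w)%:E
        = \int[P]_(w in V @^-1` A) (mu (V w))%:E].
End Defs.

Definition loss (R : realType) d (Om : measurableType d) (P : probability Om R)
  dX dW (TX : measurableType dX) (TW : measurableType dW)
  (X : Om -> TX) (W : Om -> TW) (Y : Om -> R) (n m : nat) (lam : R)
  (f : TX -> R) (g : TX * TW -> R) : \bar R :=
  let N := (n + m)%N in
  ((n%:R / N%:R)%:E * \int[P]_w ((Y w - f (X w)) ^+ 2)%:E
   + (m%:R / N%:R)%:E * \int[P]_w ((g (X w, W w) - f (X w)) ^+ 2)%:E
   + (lam * (n%:R / N%:R))%:E * \int[P]_w ((Y w - g (X w, W w)) ^+ 2)%:E).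

(** Correlation score from the cross moment [c] and the two second moments
    [a], [b], with the convention [0] when a denominator factor is zero. *)
Definition corr_score (R : realType) (c a b : \bar R) : R :=
  if (a == 0) || (b == 0) then 0%R
  else (`|fine c| / (Num.sqrt (fine a) * Num.sqrt (fine b)))%R.

Definition gamma_nml (R : realType) (n m : nat) (lam rho : R) : R :=
  (1 - (m%:R ^+ 2) / ((n + m)%N%:R * (m%:R + n%:R * lam)) * rho ^+ 2)%R.

(* Main.v *)
Require Import Defs.
From HB Require Import structures.
From mathcomp Require Import all_boot all_order all_algebra.
From mathcomp Require Import all_classical all_reals all_analysis.
From mathcomp Require Import ring lra measurable_realfun.
Import Order.TTheory GRing.Theory Num.Theory.
Local Open Scope classical_set_scope.
Local Open Scope ring_scope.
Lemma mEFin {R : realType} {dT} {T : measurableType dT} {g : T -> R} : measurable_fun setT g ->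
  measurable_fun setT (fun w => (g w)%:E).
Proof. by move=> mg; apply/measurable_EFinP. Qed.

Section L2sec.
Context {R : realType} {d : measure_display} {Om : measurableType d}
  (P : probability Om R).

Definition L2 (u : Om -> R) := measurable_fun setT u /\ sq_integrable P u.
Definition ip (u v : Om -> R) : R := fine (\int[P]_w (u w * v w)%:E)%E.

Lemma L2_int2 {u : Om -> R} : L2 u -> P.-integrable setT (fun w => ((u w) ^+ 2)%:E).
Proof.
move=> [mu iu]; apply/integrableP; split.
  by apply: mEFin; exact: measurable_funX.
under eq_integral do rewrite gee0_abs ?lee_fin ?sqr_ge0//.
exact: iu.
Qed.

Lemma L2_of_int (u : Om -> R) : measurable_fun setT u ->
  P.-integrable setT (fun w => ((u w) ^+ 2)%:E) -> L2 u.
Proof.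
move=> mu /integrableP[_ iu]; split => //; rewrite /sq_integrable.
by move: iu; under eq_integral do rewrite gee0_abs ?lee_fin ?sqr_ge0//.
Qed.

Lemma L2_intM {u v : Om -> R} : L2 u -> L2 v -> P.-integrable setT (fun w => (u w * v w)%:E).
Proof.
move=> hu hv.
apply: (le_integrable measurableT _ _ (integrableD measurableT (L2_int2 hu) (L2_int2 hv))).
  apply: mEFin; apply: measurable_funM; [exact: hu.1|exact: hv.1].
move=> w _ /=; rewrite lee_fin.
rewrite [X in (_ <= X)%R]ger0_norm ?addr_ge0 ?sqr_ge0//.
have := sqr_ge0 (u w - v w); have := sqr_ge0 (u w + v w).
rewrite ler_norml; move=> h1 h2; apply/andP; split; nra.
Qed.

Lemma L2_le (u v h : Om -> R) (a b : R) : L2 u -> L2 v -> measurable_fun setT h ->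
  (0 <= a)%R -> (0 <= b)%R ->
  (forall w, `|h w| <= a * `|u w| + b * `|v w|)%R -> L2 h.
Proof.
move=> hu hv mh a0 b0 hb; apply: L2_of_int => //.
have i2 := integrableD measurableT (integrableZl measurableT (2 * a ^+ 2)%R (L2_int2 hu))
  (integrableZl measurableT (2 * b ^+ 2)%R (L2_int2 hv)).
apply: (le_integrable measurableT _ _ i2).
  by apply: mEFin; exact: measurable_funX.
move=> w _ /=; rewrite lee_fin.
rewrite ger0_norm ?sqr_ge0// ger0_norm; last first.
  by rewrite addr_ge0// mulr_ge0 ?sqr_ge0// mulr_ge0// ?sqr_ge0.
have := hb w; have := normr_ge0 (h w); have := normr_ge0 (u w); have := normr_ge0 (v w).
rewrite -(real_normK (num_real (h w))) -(real_normK (num_real (u w))) -(real_normK (num_real (v w))).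
set x := (`|h w|)%R; set y := (`|u w|)%R; set z := (`|v w|)%R => z0 y0 x0 hx.
have : (x ^+ 2 <= (a * y + b * z) ^+ 2)%R.
  by rewrite ler_sqr ?nnegrE// addr_ge0// mulr_ge0.
have := sqr_ge0 (a * y - b * z).
move=> h1 h2; nra.
Qed.


Lemma ipE {u v : Om -> R} : L2 u -> L2 v -> (\int[P]_w (u w * v w)%:E = (ip u v)%:E)%E.
Proof.
by move=> hu hv; rewrite /ip fineK//; apply: integrable_fin_num => //; exact: L2_intM.
Qed.

Lemma ipC (u v : Om -> R) : ip u v = ip v u.
Proof. by rewrite /ip; under eq_integral do rewrite mulrC. Qed.

Lemma ip_ge0 (u : Om -> R) : (0 <= ip u u)%R.
Proof. by rewrite /ip fine_ge0// integral_ge0// => w _; rewrite lee_fin -expr2 sqr_ge0. Qed.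

Lemma ipDl {u v h : Om -> R} : L2 u -> L2 v -> L2 h ->
  ip (fun w => u w + v w) h = (ip u h + ip v h)%R.
Proof.
move=> hu hv hh; rewrite /ip.
under eq_integral do rewrite mulrDl EFinD.
rewrite integralD//; [|exact: L2_intM|exact: L2_intM].
by rewrite fineD//; apply: integrable_fin_num => //; exact: L2_intM.
Qed.

Lemma ipBl {u v h : Om -> R} : L2 u -> L2 v -> L2 h ->
  ip (fun w => u w - v w) h = (ip u h - ip v h)%R.
Proof.
move=> hu hv hh; rewrite /ip.
under eq_integral do rewrite mulrBl EFinB.
rewrite integralB//; [|exact: L2_intM|exact: L2_intM].
by rewrite fineB//; apply: integrable_fin_num => //; exact: L2_intM.
Qed.

Lemma ipZl (c : R) {u h : Om -> R} : L2 u -> L2 h ->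
  ip (fun w => c * u w) h = (c * ip u h)%R.
Proof.
move=> hu hh; rewrite /ip.
under eq_integral do rewrite -mulrA EFinM.
rewrite integralZl//; last exact: L2_intM.
by rewrite fineM//; apply: integrable_fin_num => //; exact: L2_intM.
Qed.

Lemma ipDr {u v h : Om -> R} : L2 u -> L2 v -> L2 h ->
  ip h (fun w => u w + v w) = (ip h u + ip h v)%R.
Proof. by move=> *; rewrite ipC ipDl // ![ip _ h]ipC. Qed.

Lemma ipBr {u v h : Om -> R} : L2 u -> L2 v -> L2 h ->
  ip h (fun w => u w - v w) = (ip h u - ip h v)%R.
Proof. by move=> *; rewrite ipC ipBl // ![ip _ h]ipC. Qed.

Lemma ipZr (c : R) {u h : Om -> R} : L2 u -> L2 h ->
  ip h (fun w => c * u w) = (c * ip h u)%R.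
Proof. by move=> *; rewrite ipC ipZl // ipC. Qed.

Lemma L2D {u v : Om -> R} : L2 u -> L2 v -> L2 (fun w => u w + v w).
Proof.
move=> hu hv; apply: (L2_le _ _ _ 1 1 hu hv _ ler01 ler01).
  by apply: measurable_funD; [exact: hu.1|exact: hv.1].
by move=> w; rewrite !mul1r ler_normD.
Qed.

Lemma L2B {u v : Om -> R} : L2 u -> L2 v -> L2 (fun w => u w - v w).
Proof.
move=> hu hv; apply: (L2_le _ _ _ 1 1 hu hv _ ler01 ler01).
  by apply: measurable_funB; [exact: hu.1|exact: hv.1].
by move=> w; rewrite !mul1r ler_normB.
Qed.

Lemma L2Z (c : R) {u : Om -> R} : L2 u -> L2 (fun w => c * u w).
Proof.
move=> hu; apply: (L2_le _ _ _ `|c| 0 hu hu _ (normr_ge0 c) (lexx 0)).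
  by apply: measurable_funM => //; exact: hu.1.
by move=> w; rewrite mul0r addr0 normrM.
Qed.

Lemma CS_real (a b c : R) : (0 <= a)%R -> (0 <= b)%R ->
  (forall t, 0 <= a - 2 * t * c + t ^+ 2 * b)%R -> (c ^+ 2 <= a * b)%R.
Proof.
move=> a0 b0 H.
have [b_gt0|] := ltP 0%R b.
  have := H (c / b).
  have -> : (a - 2 * (c / b) * c + (c / b) ^+ 2 * b = (a * b - c ^+ 2) / b)%R.
    by field; rewrite lt0r_neq0.
  move=> h; have := mulr_ge0 h (ltW b_gt0).
  by rewrite divfK ?lt0r_neq0 // subr_ge0.
move=> b_le0; have b0' : b = 0%R by apply/eqP; rewrite eq_le b_le0 b0.
subst b; rewrite mulr0.
have [c0|c0] := eqVneq c 0%R; first by rewrite c0 expr0n.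
have := H ((a + 1) / (2 * c)); rewrite mulr0 addr0.
have -> : (2 * ((a + 1) / (2 * c)) * c = a + 1)%R by field; rewrite c0.
lra.
Qed.

Lemma CS {u v : Om -> R} : L2 u -> L2 v -> ((ip u v) ^+ 2 <= ip u u * ip v v)%R.
Proof.
move=> hu hv; apply: CS_real; try exact: ip_ge0.
move=> t; have := ip_ge0 (fun w => u w - t * v w).
rewrite ipBl ?ipBr ?ipZl ?ipZr //; try exact: L2Z; try exact: L2B; try exact: L2Z.
rewrite [ip v u]ipC.
suff -> : (ip u u - t * ip u v - (t * ip u v - t * (t * ip v v)) = ip u u - 2 * t * ip u v + t ^+ 2 * ip v v)%R by [].
ring.
by apply: L2B => //; apply: L2Z.
Qed.

Lemma ip_null {z : Om -> R} (h : Om -> R) : L2 z -> L2 h -> ip z z = 0%R -> ip z h = 0%R.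
Proof.
move=> hz hh z0; have := CS hz hh; rewrite z0 mul0r.
move=> H; apply/eqP; rewrite -sqrf_eq0 eq_le H sqr_ge0//.
Qed.

Lemma ip_ae {u1 u2 : Om -> R} (h : Om -> R) : L2 u1 -> L2 u2 -> L2 h ->
  {ae P, forall w, u1 w = u2 w} -> ip u1 h = ip u2 h.
Proof.
move=> h1 h2 hh ae; rewrite /ip; congr fine; apply: ae_eq_integral => //.
- by apply: mEFin; apply: measurable_funM; [exact: h1.1|exact: hh.1].
- by apply: mEFin; apply: measurable_funM; [exact: h2.1|exact: hh.1].
- by apply: filterS ae => w ->.
Qed.

End L2sec.
Section ortho.
Context {R : realType} {d : measure_display} {Om : measurableType d}
  (P : probability Om R) {dT : measure_display} {T : measurableType dT}
  (V : Om -> T) (mV : measurable_fun setT V).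
Import HBNNSimple.

Let mpre (B : set T) : measurable B -> measurable (V @^-1` B).
Proof. by move=> mB; rewrite -[X in measurable X]setTI; exact: mV. Qed.

Lemma simple_int (s : {nnsfun T >-> R}) (p : Om -> R) :
  measurable_fun setT p -> (forall w, 0 <= p w) ->
  (\int[P]_w ((s (V w)) * p w)%:E =
   \sum_(y \in range s) (y%:E * \int[P]_(w in V @^-1` (s @^-1` [set y])) (p w)%:E))%E.
Proof.
move=> mp p0.
have mB y : measurable (V @^-1` (s @^-1` [set y])) by apply: mpre; exact: measurable_sfunP.
transitivity (\int[P]_w (\sum_(y \in range s)
   (y * (\1_(V @^-1` (s @^-1` [set y])) w * p w))%:E))%E.
  apply: eq_integral => w _; rewrite fsumEFin //; congr EFin.
  by rewrite fimfunE mulr_fsuml; apply: eq_fsbigr => y _; rewrite mulrA.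
rewrite ge0_integral_fsum //; last 2 first.
- move=> y; apply: mEFin; apply: measurable_funM => //.
  by apply: measurable_funM => //; exact: measurable_indic.
- move=> y w _; rewrite lee_fin.
  case: (boolP (y \in range s)) => [|/negP yr].
    by rewrite inE => -[t _ <-]; rewrite !mulr_ge0.
  rewrite indicE; case: (boolP (w \in _)) => //; last by rewrite !mul0r mulr0.
  by rewrite inE /= => sy; exfalso; apply: yr; rewrite inE; exists (V w).
apply: eq_fsbigr => y; rewrite inE => -[t _ <-].
under eq_integral do rewrite EFinM.
rewrite ge0_integralZl //; last 3 first.
- apply: mEFin; apply: measurable_funM => //; exact: measurable_indic.
- by move=> w _; rewrite lee_fin mulr_ge0.
- by rewrite lee_fin.
congr (_ * _)%E; rewrite [RHS]integral_mkcond; apply: eq_integral => w _.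
rewrite patchE indicE; case: (boolP (w \in _)) => _; first by rewrite mul1r.
by rewrite mul0r.
Qed.


Lemma core_eq (p q : Om -> R) : measurable_fun setT p -> measurable_fun setT q ->
  (forall w, 0 <= p w) -> (forall w, 0 <= q w) ->
  (forall B, measurable B -> \int[P]_(w in V @^-1` B) (p w)%:E = \int[P]_(w in V @^-1` B) (q w)%:E)%E ->
  forall k : T -> R, measurable_fun setT k -> (forall t, 0 <= k t) ->
  (\int[P]_w (k (V w) * p w)%:E = \int[P]_w (k (V w) * q w)%:E)%E.
Proof.
move=> mp mq p0 q0 H k mk k0.
have mkE : measurable_fun setT (fun t => (k t)%:E) := mEFin mk.
have k0E : forall t, setT t -> (0 <= (k t)%:E)%E by move=> t _; rewrite lee_fin.
pose g := nnsfun_approx measurableT mkE.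
suff L (r : Om -> R) : measurable_fun setT r -> (forall w, 0 <= r w) ->
    (\int[P]_w (k (V w) * r w)%:E = limn (fun n => \int[P]_w ((g n (V w)) * r w)%:E))%E.
  rewrite L // L //.
  suff -> : (fun n => (\int[P]_w (g n (V w) * p w)%:E)%E) =
    (fun n => (\int[P]_w (g n (V w) * q w)%:E)%E) by [].
  apply/funext => n; rewrite !simple_int //.
  by apply: eq_fsbigr => y _; rewrite H //; exact: measurable_sfunP.
move=> mr r0; rewrite -monotone_convergence //; last 3 first.
- move=> n; apply: mEFin; apply: measurable_funM => //.
  by apply: measurableT_comp => //; exact: measurable_funPT.
- by move=> n w _; rewrite lee_fin mulr_ge0.
- move=> w _ a b ab; rewrite lee_fin ler_wpM2r //.
  by have := nd_nnsfun_approx measurableT mkE ab => /lefP; apply.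
apply: eq_integral => w _; apply/esym/cvg_lim => //.
rewrite EFinM; under eq_fun do rewrite EFinM.
apply: cvgeZr => //.
exact: (cvg_nnsfun_approx measurableT mkE k0E).
Qed.


Lemma int_le2P (f g1 g2 : Om -> R) : measurable_fun setT f ->
  P.-integrable setT (fun w => (g1 w)%:E) -> P.-integrable setT (fun w => (g2 w)%:E) ->
  (forall w, `|f w| <= `|g1 w| + `|g2 w|) -> P.-integrable setT (fun w => (f w)%:E).
Proof.
move=> mf i1 i2 hb.
apply: (le_integrable measurableT _ _ (integrableD measurableT (integrable_abse i1) (integrable_abse i2))).
  exact: mEFin.
move=> w _ /=; rewrite lee_fin.
by rewrite [X in (_ <= X)%R]ger0_norm ?addr_ge0.
Qed.

Lemma ortho (Y : Om -> R) (mu : T -> R) : measurable_fun setT Y ->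
  P.-integrable setT (fun w => (Y w)%:E) -> is_cond_exp P V Y mu ->
  forall h : T -> R, measurable_fun setT h ->
  P.-integrable setT (fun w => (Y w * h (V w))%:E) ->
  P.-integrable setT (fun w => (mu (V w) * h (V w))%:E) ->
  (\int[P]_w (Y w * h (V w))%:E = \int[P]_w (mu (V w) * h (V w))%:E)%E.
Proof.
move=> mY iY [mmu imu ce] h mh i1 i2.
have mmV : measurable_fun setT (fun w => mu (V w)) by exact: measurableT_comp.
have mhV : measurable_fun setT (fun w => h (V w)) by exact: measurableT_comp.
pose c w := `|Y w| + `|mu (V w)|.
have mc : measurable_fun setT c.
  by apply: measurable_funD; apply: measurableT_comp => //; exact: normr_measurable.
have ic : P.-integrable setT (fun w => (c w)%:E).
  apply: (int_le2P _ _ _ mc iY imu) => w; rewrite /c ger0_norm ?addr_ge0//.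
have iS (f : Om -> R) B : measurable B -> P.-integrable setT (fun w => (f w)%:E) ->
    P.-integrable (V @^-1` B) (fun w => (f w)%:E).
  by move=> mB; apply: integrableS => //; exact: mpre.
have H B : measurable B -> (\int[P]_(w in V @^-1` B) (Y w + c w)%:E =
    \int[P]_(w in V @^-1` B) (mu (V w) + c w)%:E)%E.
  move=> mB; under eq_integral do rewrite EFinD.
  under [RHS]eq_integral do rewrite EFinD.
  rewrite integralD //; try exact: mpre; try exact: iS.
  rewrite [RHS]integralD //; try exact: mpre; try exact: iS.
  by rewrite ce.
have ikf (k : T -> R) (f : Om -> R) : measurable_fun setT k -> measurable_fun setT f ->
    (forall t, 0 <= k t) -> (forall t, k t <= `|h t|) ->
    P.-integrable setT (fun w => (f w * h (V w))%:E) ->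
    P.-integrable setT (fun w => (k (V w) * f w)%:E).
  move=> mk mf k0 kh i.
  apply: (int_le2P _ _ _ _ i i).
    by apply: measurable_funM => //; exact: measurableT_comp.
  move=> w; rewrite !normrM (ger0_norm (k0 _)).
  have := kh (V w); have := normr_ge0 (f w); have := normr_ge0 (h (V w)); nra.
have key (k : T -> R) : measurable_fun setT k -> (forall t, 0 <= k t) ->
    (forall t, k t <= `|h t|) ->
    (\int[P]_w (k (V w) * Y w)%:E = \int[P]_w (k (V w) * mu (V w))%:E)%E.
  move=> mk k0 kh.
  have mkV : measurable_fun setT (fun w => k (V w)) by exact: measurableT_comp.
  have ikc : P.-integrable setT (fun w => (k (V w) * c w)%:E).
    apply: (int_le2P _ _ _ _ i1 i2); first exact: measurable_funM.
    move=> w; rewrite /c normrM [X in _ * X]ger0_norm ?addr_ge0 // mulrDr !normrM.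
    rewrite (ger0_norm (k0 _)).
    have := kh (V w); have := normr_ge0 (Y w); have := normr_ge0 (mu (V w)); nra.
  have ikY : P.-integrable setT (fun w => (k (V w) * Y w)%:E).
    apply: (int_le2P _ _ _ _ i1 i1); first exact: measurable_funM.
    move=> w; rewrite !normrM (ger0_norm (k0 _)).
    have := kh (V w); have := normr_ge0 (Y w); have := normr_ge0 (h (V w)); nra.
  have ikm : P.-integrable setT (fun w => (k (V w) * mu (V w))%:E).
    apply: (int_le2P _ _ _ _ i2 i2); first exact: measurable_funM.
    move=> w; rewrite !normrM (ger0_norm (k0 _)).
    have := kh (V w); have := normr_ge0 (mu (V w)); have := normr_ge0 (h (V w)); nra.
  have m1 : measurable_fun setT (fun w => Y w + c w) by apply: measurable_funD.
  have m2 : measurable_fun setT (fun w => mu (V w) + c w) by apply: measurable_funD.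
  have p0 w : 0 <= Y w + c w.
    by rewrite /c; have := ler_norm (- Y w); rewrite normrN; have := normr_ge0 (mu (V w)); lra.
  have q0 w : 0 <= mu (V w) + c w.
    by rewrite /c; have := ler_norm (- mu (V w)); rewrite normrN; have := normr_ge0 (Y w); lra.
  have := core_eq _ _ m1 m2 p0 q0 H _ mk k0.
  under eq_integral do rewrite mulrDr EFinD.
  under [X in _ = X -> _]eq_integral do rewrite mulrDr EFinD.
  rewrite integralD // [X in _ = X -> _]integralD //.
  move/(congr1 (fun z => z - \int[P]_w (k (V w) * c w)%:E)%E).
  by rewrite !addeK //; apply: integrable_fin_num.
pose hp t := (`|h t| + h t) / 2; pose hm t := (`|h t| - h t) / 2.
have mn : measurable_fun setT (fun t => `|h t|) by apply: measurableT_comp => //; exact: normr_measurable.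
have hpm : measurable_fun setT hp.
  by apply: measurable_funM => //; apply: measurable_funD.
have hmm : measurable_fun setT hm.
  by apply: measurable_funM => //; apply: measurable_funB.
have hp0 t : 0 <= hp t by rewrite /hp divr_ge0 // -lerBlDr sub0r -normrN ler_norm.
have hm0 t : 0 <= hm t by rewrite /hm divr_ge0 // subr_ge0 ler_norm.
have hph t : hp t <= `|h t|.
  by rewrite /hp ler_pdivrMr // mulr2n mulrDr mulr1 lerD2l ler_norm.
have hmh t : hm t <= `|h t|.
  by rewrite /hm ler_pdivrMr // mulr2n mulrDr mulr1 lerD2l -normrN ler_norm.
have hE t : h t = hp t - hm t by rewrite /hp /hm; field.
have ipp := ikf _ _ hpm mY hp0 hph i1.
have ipm := ikf _ _ hmm mY hm0 hmh i1.
have imp := ikf _ _ hpm mmV hp0 hph i2.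
have imm := ikf _ _ hmm mmV hm0 hmh i2.
transitivity (\int[P]_w (hp (V w) * Y w)%:E - \int[P]_w (hm (V w) * Y w)%:E)%E.
  rewrite -integralB //; apply: eq_integral => w _; rewrite -EFinB (hE (V w)).
  by congr EFin; ring.
transitivity (\int[P]_w (hp (V w) * mu (V w))%:E - \int[P]_w (hm (V w) * mu (V w))%:E)%E.
  by rewrite key // key.
rewrite -integralB //; apply: eq_integral => w _; rewrite -EFinB (hE (V w)).
by congr EFin; ring.
Qed.

End ortho.
Lemma EFin_ge0 {R : realType} (x : R) : (0 <= x)%R -> (0%R <= x%:E)%E.
Proof. by rewrite lee_fin. Qed.

Lemma quad_nonneg {R : realType} {A B C al be ga : R} : 0 <= A -> 0 <= B -> C ^+ 2 <= A * B ->
  0 <= al -> 0 <= be -> ga ^+ 2 <= al * be -> 0 <= al * A + be * B - 2 * (ga * C).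
Proof.
move=> A0 B0 hC al0 be0 hg.
have X0 : 0 <= al * A by rewrite mulr_ge0.
have Y0 : 0 <= be * B by rewrite mulr_ge0.
have h1 : (ga * C) ^+ 2 <= (al * A) * (be * B).
  rewrite exprMn.
  have -> : al * A * (be * B) = (al * be) * (A * B) by ring.
  by apply: ler_pM => //; rewrite sqr_ge0.
have h2 : 4 * ((al * A) * (be * B)) <= (al * A + be * B) ^+ 2.
  have := sqr_ge0 (al * A - be * B); nra.
have h3 : `|2 * (ga * C)| <= al * A + be * B.
  rewrite -ler_sqr ?nnegrE ?addr_ge0 //.
  rewrite real_normK ?num_real //; nra.
have := ler_norm (2 * (ga * C)); lra.
Qed.

Section gen_int.
Context {R : realType} {d : measure_display} {Om : measurableType d}
  {P : measure Om R}.

Lemma int_le2 (f g1 g2 : Om -> R) : measurable_fun setT f ->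
  P.-integrable setT (fun w => (g1 w)%:E) -> P.-integrable setT (fun w => (g2 w)%:E) ->
  (forall w, `|f w| <= `|g1 w| + `|g2 w|) -> P.-integrable setT (fun w => (f w)%:E).
Proof.
move=> mf i1 i2 hb.
apply: (le_integrable measurableT _ _ (integrableD measurableT (integrable_abse i1) (integrable_abse i2))).
  exact: mEFin.
move=> w _ /=; rewrite lee_fin.
by rewrite [X in (_ <= X)%R]ger0_norm ?addr_ge0.
Qed.

Lemma int_ge0_fin (A : Om -> R) : measurable_fun setT A -> (forall v, 0 <= A v) ->
  (\int[P]_v (A v)%:E < +oo)%E -> P.-integrable setT (fun v => (A v)%:E).
Proof.
move=> mA A0 fA; apply/integrableP; split; first exact: mEFin.
by under eq_integral do rewrite gee0_abs ?lee_fin //.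
Qed.

Lemma int_lin (A B C : Om -> R) (al be ga : R) :
  P.-integrable setT (fun v => (A v)%:E) -> P.-integrable setT (fun v => (B v)%:E) ->
  P.-integrable setT (fun v => (C v)%:E) ->
  (\int[P]_v (al * A v + be * B v - 2 * (ga * C v))%:E =
   (al%:E * \int[P]_v (A v)%:E + be%:E * \int[P]_v (B v)%:E
    - (2 * ga)%:E * \int[P]_v (C v)%:E))%E.
Proof.
move=> iA iB iC.
under eq_integral do rewrite mulrA EFinB EFinD !EFinM.
rewrite integralB //; last 2 first.
- by apply: integrableD => //; apply: integrableZl.
- by apply: integrableZl.
rewrite integralD //; try by apply: integrableZl.
by rewrite !integralZl.
Qed.

End gen_int.

Lemma corr0 {R : realType} (c a b : \bar R) : (fine a = 0 \/ fine b = 0) -> corr_score c a b = 0.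
Proof.
rewrite /corr_score; case: ifP => // _ [->|->]; rewrite sqrtr0 ?mul0r ?mulr0 invr0 mulr0 //.
Qed.

Lemma corr_fin {R : realType} {c a b : R} : 0 <= a -> 0 <= b -> c ^+ 2 <= a * b ->
  let rho := corr_score c%:E a%:E b%:E in
  [/\ 0 <= rho, rho <= 1 & c <= rho * (Num.sqrt a * Num.sqrt b)].
Proof.
move=> a0 b0 hc /=; rewrite /corr_score /=.
case: ifP.
  move=> /orP[/eqP a00|/eqP b00].
    have a00' : a = 0 by case: a00.
    subst a; rewrite mul0r in hc.
    have c0 : c = 0 by apply/eqP; rewrite -sqrf_eq0 eq_le hc sqr_ge0.
    by rewrite c0 mul0r ler01.
  have b00' : b = 0 by case: b00.
  subst b; rewrite mulr0 in hc.
  have c0 : c = 0 by apply/eqP; rewrite -sqrf_eq0 eq_le hc sqr_ge0.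
  by rewrite c0 mul0r ler01.
move/negbT; rewrite negb_or => /andP[a00 b00].
have ap : 0 < a by rewrite lt_def a0 andbT; apply: contra a00 => /eqP ->.
have bp : 0 < b by rewrite lt_def b0 andbT; apply: contra b00 => /eqP ->.
have sp : 0 < Num.sqrt a * Num.sqrt b by rewrite mulr_gt0 // sqrtr_gt0.
split.
- by rewrite divr_ge0 // ltW.
- rewrite ler_pdivrMr // mul1r -sqrtrM // -(sqrtr_sqr c).
  by rewrite ler_sqrt // mulr_ge0.
- by rewrite divfK ?lt0r_neq0 // ler_norm.
Qed.

Lemma outer (R : realType) (dD : measure_display) (OmD : measurableType dD)
  (Q : probability OmD R) (A B C : OmD -> R) (n m : nat) (lam : R) :
  (1 <= n)%N -> (1 <= m)%N -> 0 <= lam ->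
  measurable_fun setT A -> measurable_fun setT B -> measurable_fun setT C ->
  (forall v, 0 <= A v) -> (forall v, 0 <= B v) -> (forall v, C v ^+ 2 <= A v * B v) ->
  let rho := corr_score (\int[Q]_v (C v)%:E)%E (\int[Q]_v (A v)%:E)%E (\int[Q]_v (B v)%:E)%E in
  let gam := gamma_nml n m lam rho in
  n%:R / (n + m)%N%:R <= gam /\
  (\int[Q]_v (A v)%:E <= \int[Q]_v (A v + ((m%:R + n%:R * lam) / (n + m)%N%:R) * B v
        - 2 * ((m%:R / (n + m)%N%:R) * C v))%:E * (gam^-1)%:E)%E.
Proof.
move=> n1 m1 lam0 mA mB mC A0 B0 hC rho gam.
set N := (n + m)%N%:R; set k := (m%:R + n%:R * lam) / N; set be := m%:R / N.
have NE : N = n%:R + m%:R by rewrite /N natrD.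
have np : 0 < n%:R :> R by rewrite ltr0n.
have mp : 0 < m%:R :> R by rewrite ltr0n.
have Np : 0 < N by rewrite NE addr_gt0.
have sp : 0 < m%:R + n%:R * lam by rewrite ltr_wpDr // mulr_ge0 // ltW.
have kp : 0 < k by rewrite divr_gt0.
have bep : 0 < be by rewrite divr_gt0.
have bek : be <= k by rewrite ler_pM2r ?invr_gt0 // lerDl mulr_ge0 // ltW.
have nN : n%:R / N = 1 - be by rewrite /be NE; field; rewrite -NE lt0r_neq0.
pose diff v := A v + k * B v - 2 * (be * C v).
have mdiff : measurable_fun setT diff.
  rewrite /diff; apply: measurable_funB; first apply: measurable_funD => //.
    by apply: measurable_funM.
  by apply: measurable_funM => //; apply: measurable_funM.
have F2 v : n%:R / N * A v <= diff v.
  rewrite -subr_ge0 /diff nN.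
  have := quad_nonneg (A0 v) (B0 v) (hC v) (ltW bep) (ltW kp) (_ : be ^+ 2 <= be * k).
  have -> : A v + k * B v - 2 * (be * C v) - (1 - be) * A v =
      be * A v + k * B v - 2 * (be * C v) by ring.
  by apply; rewrite expr2 ler_pM2l.
have diff0 v : 0 <= diff v by apply: le_trans (F2 v); rewrite mulr_ge0 // divr_ge0 // ltW.
have nN1 : n%:R / N <= 1 by rewrite ler_pdivrMr // mul1r NE lerDl ltW.
have gam1 : rho = 0 -> gam = 1.
  by move=> r0; rewrite /gam /gamma_nml r0 expr0n /= mulr0 subr0.
have IA0 : (0 <= \int[Q]_v (A v)%:E)%E by apply: integral_ge0 => v _; rewrite lee_fin.
have IB0 : (0 <= \int[Q]_v (B v)%:E)%E by apply: integral_ge0 => v _; rewrite lee_fin.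
have ID0 : (0 <= \int[Q]_v (diff v)%:E)%E by apply: integral_ge0 => v _; rewrite lee_fin.
case: (ltP (\int[Q]_v (A v)%:E)%E +oo%E) => [IAfin|]; last first.
  rewrite leye_eq => /eqP IAoo.
  have r0 : rho = 0 by apply: corr0; left; rewrite IAoo.
  rewrite (gam1 r0) invr1 mule1; split => //.
  rewrite IAoo.
  have <- : ((n%:R / N)%:E * +oo = +oo)%E by rewrite muleC gt0_mulye // lte_fin divr_gt0.
  rewrite -IAoo -ge0_integralZl //; last 3 first.
  - exact: mEFin.
  - by move=> v _; rewrite lee_fin.
  - by rewrite lee_fin divr_ge0 // ltW.
  apply: ge0_le_integral => //.
  - by move=> v _; rewrite lee_fin mulr_ge0 // divr_ge0 // ltW.
  - by apply: mEFin; apply: measurable_funM.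
  - exact: mEFin.
  - by move=> v _; rewrite lee_fin F2.
case: (ltP (\int[Q]_v (B v)%:E)%E +oo%E) => [IBfin|]; last first.
  rewrite leye_eq => /eqP IBoo.
  have r0 : rho = 0 by apply: corr0; right; rewrite IBoo.
  rewrite (gam1 r0) invr1 mule1; split => //.
  pose c' := 2 * be ^+ 2 / k.
  have c'0 : 0 <= c'.
    by apply: divr_ge0; [apply: mulr_ge0 => //; exact: sqr_ge0 | exact: ltW].
  have F3 v : k / 2 * B v <= diff v + c' * A v.
    rewrite -subr_ge0 /diff.
    have := quad_nonneg (A0 v) (B0 v) (hC v) (_ : 0 <= 1 + c') (_ : 0 <= k / 2) (_ : be ^+ 2 <= (1 + c') * (k / 2)).
    have -> : A v + k * B v - 2 * (be * C v) + c' * A v - k / 2 * B v =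
      (1 + c') * A v + k / 2 * B v - 2 * (be * C v) by field.
    apply.
    - by rewrite addr_ge0.
    - by rewrite divr_ge0 // ltW.
    - rewrite mulrDl mul1r /c'.
      have -> : 2 * be ^+ 2 / k * (k / 2) = be ^+ 2 by field; rewrite lt0r_neq0.
      by rewrite lerDr divr_ge0 // ltW.
  have H1 : ((k / 2)%:E * \int[Q]_v (B v)%:E <= \int[Q]_v (diff v)%:E + c'%:E * \int[Q]_v (A v)%:E)%E.
    have e1 : ((k / 2)%:E * \int[Q]_v (B v)%:E = \int[Q]_v ((k / 2)%:E * (B v)%:E))%E.
      rewrite ge0_integralZl //; first exact: mEFin.
      - by move=> v _; exact: EFin_ge0.
      - by apply: EFin_ge0; rewrite divr_ge0 // ltW.
    have e2 : (c'%:E * \int[Q]_v (A v)%:E = \int[Q]_v (c'%:E * (A v)%:E))%E.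
      rewrite ge0_integralZl //; first exact: mEFin.
      - by move=> v _; exact: EFin_ge0.
    rewrite e1 e2 -ge0_integralD //; last 4 first.
    - by move=> v _; exact: EFin_ge0.
    - exact: mEFin.
    - by move=> v _; rewrite mule_ge0 //; exact: EFin_ge0.
    - by apply: emeasurable_funM => //; exact: mEFin.
    apply: ge0_le_integral => //.
    - by move=> v _; rewrite mule_ge0 // lee_fin // divr_ge0 // ltW.
    - by apply: emeasurable_funM => //; exact: mEFin.
    - by apply: emeasurable_funD; [exact: mEFin|apply: emeasurable_funM => //; exact: mEFin].
    - by move=> v _; rewrite -EFinM -EFinM -EFinD lee_fin F3.
  move: H1; rewrite IBoo muleC gt0_mulye ?lte_fin ?divr_gt0 //.
  case: (ltP (\int[Q]_v (diff v)%:E)%E +oo%E) => [IDfin|]; last first.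
    by rewrite leye_eq => /eqP -> _; exact: leey.
  move=> H1; exfalso; move: H1; apply/negP; rewrite -ltNge.
  apply: lte_add_pinfty => //.
  by rewrite -ge0_fin_numE ?mule_ge0 ?lee_fin // fin_numM // ge0_fin_numE.
have iA := int_ge0_fin _ mA A0 IAfin.
have iB := int_ge0_fin _ mB B0 IBfin.
have iC : Q.-integrable setT (fun v => (C v)%:E).
  apply: (int_le2 _ _ _ mC iA iB) => v.
  rewrite (ger0_norm (A0 v)) (ger0_norm (B0 v)).
  rewrite -ler_sqr ?nnegrE ?addr_ge0 // real_normK ?num_real //.
  have := hC v; have := A0 v; have := B0 v; nra.
set a := fine (\int[Q]_v (A v)%:E)%E.
set b := fine (\int[Q]_v (B v)%:E)%E.
set c := fine (\int[Q]_v (C v)%:E)%E.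
have IAE : (\int[Q]_v (A v)%:E)%E = a%:E by rewrite fineK // ge0_fin_numE.
have IBE : (\int[Q]_v (B v)%:E)%E = b%:E by rewrite fineK // ge0_fin_numE.
have ICE : (\int[Q]_v (C v)%:E)%E = c%:E by rewrite fineK //; exact: integrable_fin_num.
have a0 : 0 <= a by rewrite /a fine_ge0.
have b0 : 0 <= b by rewrite /b fine_ge0.
have lin al be' ga : (\int[Q]_v (al * A v + be' * B v - 2 * (ga * C v))%:E =
    (al * a + be' * b - 2 * (ga * c))%:E)%E.
  by rewrite int_lin // IAE IBE ICE -!EFinM -EFinD mulrA.
have cab : c ^+ 2 <= a * b.
  apply: CS_real => // t.
  have := @integral_ge0 _ _ _ Q setT (fun v => (1 * A v + t ^+ 2 * B v - 2 * (t * C v))%:E).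
  rewrite lin lee_fin.
  have -> : 1 * a + t ^+ 2 * b - 2 * (t * c) = a - 2 * t * c + t ^+ 2 * b by ring.
  apply => v _; rewrite lee_fin; apply: quad_nonneg => //; first by rewrite sqr_ge0.
  by rewrite mul1r.
have IDE : (\int[Q]_v (A v + k * B v - 2 * (be * C v))%:E = (a + k * b - 2 * (be * c))%:E)%E.
  transitivity (\int[Q]_v (1 * A v + k * B v - 2 * (be * C v))%:E)%E.
    by apply: eq_integral => v _; rewrite mul1r.
  by rewrite lin mul1r.
have rhoE : rho = corr_score c%:E a%:E b%:E by rewrite /rho IAE IBE ICE.
have [r0 r1 rc] := corr_fin a0 b0 cab; rewrite -rhoE in r0 r1 rc.
set kap := m%:R ^+ 2 / (N * (m%:R + n%:R * lam)).
have gamE : gam = 1 - kap * rho ^+ 2 by [].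
have kapk : kap * k = be ^+ 2.
  by rewrite /kap /k /be; field; rewrite -NE (lt0r_neq0 Np) (lt0r_neq0 sp).
have kapbe : kap <= be.
  have -> : kap = be * (m%:R / (m%:R + n%:R * lam)) by rewrite /kap /be; field; rewrite -?NE ?(lt0r_neq0 Np) ?(lt0r_neq0 sp).
  rewrite ger_pMr // ler_pdivrMr // mul1r lerDl mulr_ge0 // ltW //.
have rho21 : rho ^+ 2 <= 1 by rewrite expr_le1.
have kap0 : 0 <= kap by rewrite /kap divr_ge0 ?sqr_ge0 // mulr_ge0 // ltW.
have gam_ge : n%:R / N <= gam.
  rewrite gamE nN lerD2l lerN2.
  apply: le_trans (_ : kap * 1 <= _); last by rewrite mulr1.
  by rewrite ler_wpM2l.
split => //.
have gp : 0 < gam by apply: lt_le_trans gam_ge; rewrite divr_gt0.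
rewrite IAE IDE -EFinM lee_fin ler_pdivlMr //.
set x := Num.sqrt a; set y := Num.sqrt b.
have x0 : 0 <= x by rewrite sqrtr_ge0.
have y0 : 0 <= y by rewrite sqrtr_ge0.
have ax : a = x ^+ 2 by rewrite sqr_sqrtr.
have by' : b = y ^+ 2 by rewrite sqr_sqrtr.
have hc : be * c <= be * (rho * (x * y)) by rewrite ler_wpM2l // ltW.
suff : 0 <= k * (kap * rho ^+ 2 * a + k * b - 2 * (be * c)).
  rewrite pmulr_rge0 // gamE => h; rewrite -subr_ge0.
  have -> : a + k * b - 2 * (be * c) - a * (1 - kap * rho ^+ 2) =
    kap * rho ^+ 2 * a + k * b - 2 * (be * c) by ring.
  exact: h.
apply: le_trans (sqr_ge0 (k * y - be * rho * x)) _.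
rewrite ax by' -subr_ge0.
have -> : k * (kap * rho ^+ 2 * x ^+ 2 + k * y ^+ 2 - 2 * (be * c)) - (k * y - be * rho * x) ^+ 2
  = 2 * k * (be * (rho * (x * y)) - be * c) + (kap * k - be ^+ 2) * rho ^+ 2 * x ^+ 2 by ring.
rewrite kapk subrr mul0r mul0r addr0.
apply: mulr_ge0; first by apply: mulr_ge0 => //; exact: ltW.
by rewrite subr_ge0.
Qed.

Ltac l2 := repeat first [assumption | apply: L2B | apply: L2D | apply: L2Z].

Section alg.
Context {R : realType} {d : measure_display} {Om : measurableType d}
  (P : probability Om R) (Y : Om -> R) (hY : L2 P Y) (c1 c2 c3 : R).

Lemma ipBB {a b : Om -> R} : L2 P a -> L2 P b ->
  ip P (fun w => a w - b w) (fun w => a w - b w) = ip P a a - 2 * ip P a b + ip P b b.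
Proof.
move=> ha hb; rewrite ipBl ?ipBr //; try by l2.
rewrite [ip P b a]ipC; ring.
Qed.

Definition lreal (u v : Om -> R) : R :=
  c1 * ip P (fun w => Y w - u w) (fun w => Y w - u w)
  + c2 * ip P (fun w => v w - u w) (fun w => v w - u w)
  + c3 * ip P (fun w => Y w - v w) (fun w => Y w - v w).

Lemma taylor {u0 v0 u v : Om -> R} : L2 P u0 -> L2 P v0 -> L2 P u -> L2 P v ->
  lreal u v - lreal u0 v0 =
  c1 * ip P (fun w => u w - u0 w) (fun w => u w - u0 w)
  + c2 * ip P (fun w => (v w - v0 w) - (u w - u0 w)) (fun w => (v w - v0 w) - (u w - u0 w))
  + c3 * ip P (fun w => v w - v0 w) (fun w => v w - v0 w)
  + 2 * (- c1 * (ip P Y (fun w => u w - u0 w) - ip P u0 (fun w => u w - u0 w))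
         + c2 * (ip P v0 (fun w => v w - v0 w) - ip P v0 (fun w => u w - u0 w)
                 - ip P u0 (fun w => v w - v0 w) + ip P u0 (fun w => u w - u0 w))
         - c3 * (ip P Y (fun w => v w - v0 w) - ip P v0 (fun w => v w - v0 w))).
Proof.
move=> h0 k0 h k; rewrite /lreal.
rewrite !ipBB; try by l2.
rewrite !ipBl ?ipBr //; try by l2.
rewrite ?[ip P u u0]ipC ?[ip P v u]ipC ?[ip P v u0]ipC ?[ip P v0 u0]ipC ?[ip P v v0]ipC
  ?[ip P u Y]ipC ?[ip P u0 Y]ipC ?[ip P v Y]ipC ?[ip P v0 Y]ipC ?[ip P u v0]ipC.
ring.
Qed.

Lemma D_zero {u0 v0 a b M E : Om -> R} (t : R) : L2 P a -> L2 P b -> L2 P M -> L2 P E ->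
  (forall h, L2 P h -> ip P u0 h = ip P M h) ->
  (forall h, L2 P h -> ip P v0 h = t * ip P M h + (1 - t) * ip P E h) ->
  ip P Y a = ip P M a -> ip P E a = ip P M a -> ip P Y b = ip P E b ->
  c2 * (1 - t) = c3 * t ->
  - c1 * (ip P Y a - ip P u0 a) + c2 * (ip P v0 b - ip P v0 a - ip P u0 b + ip P u0 a)
    - c3 * (ip P Y b - ip P v0 b) = 0.
Proof.
move=> ha hb hM hE hu0 hv0 ha1 ha2 hb1 ht.
rewrite !hu0 // !hv0 // ha1 ha2 hb1.
have -> : - c1 * (ip P M a - ip P M a) +
  c2 * (t * ip P M b + (1 - t) * ip P E b - (t * ip P M a + (1 - t) * ip P M a) -
        ip P M b + ip P M a) - c3 * (ip P E b - (t * ip P M b + (1 - t) * ip P E b))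
  = (c2 * (1 - t) - c3 * t) * (ip P E b - ip P M b) by ring.
by rewrite ht subrr mul0r.
Qed.

Lemma Q_zero {a b : Om -> R} : L2 P a -> L2 P b -> 0 < c1 -> 0 < c2 -> 0 <= c3 ->
  c1 * ip P a a + c2 * ip P (fun w => b w - a w) (fun w => b w - a w) + c3 * ip P b b <= 0 ->
  ip P a a = 0 /\ ip P b b = 0.
Proof.
move=> ha hb c1p c2p c3p H.
have x0 := ip_ge0 P a; have y0 := ip_ge0 P b.
have z0 := ip_ge0 P (fun w => b w - a w).
have h1 : c1 * ip P a a <= 0.
  apply: le_trans H; rewrite -addrA lerDl.
  by apply: addr_ge0; apply: mulr_ge0 => //; exact: ltW.
have xa : ip P a a = 0.
  by apply/eqP; rewrite eq_le x0 andbT -(pmulr_rle0 _ c1p).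
split => //.
move: H; rewrite ipBB // xa (ipC P b a) (ip_null P b ha hb xa) mulr0 add0r mulr0 subr0 addr0.
move=> H.
have h2 : c2 * ip P b b <= 0.
  by apply: le_trans H; rewrite lerDl mulr_ge0.
by apply/eqP; rewrite eq_le y0 andbT -(pmulr_rle0 _ c2p).
Qed.

End alg.

Section misc.
Context {R : realType} {d : measure_display} {Om : measurableType d}
  (P : probability Om R).

Lemma ip_ext {u1 v1 u2 v2 : Om -> R} : (forall w, u1 w * v1 w = u2 w * v2 w) ->
  ip P u1 v1 = ip P u2 v2.
Proof. by move=> h; rewrite /ip; under eq_integral do rewrite h. Qed.

Lemma L2_ae {u1 u2 : Om -> R} : L2 P u1 -> measurable_fun setT u2 ->
  {ae P, forall w, u1 w = u2 w} -> L2 P u2.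
Proof.
move=> [m1 s1] m2 ae; split => //; rewrite /sq_integrable.
rewrite (ae_eq_integral (fun w => ((u1 w) ^+ 2)%:E)) //.
- by apply: mEFin; exact: measurable_funX.
- by apply: mEFin; exact: measurable_funX.
- by apply: filterS ae => w h _; rewrite h.
Qed.

Lemma L2_integrable {u : Om -> R} : L2 P u -> P.-integrable setT (fun w => (u w)%:E).
Proof.
move=> hu; apply: (int_le2 _ (fun _ => 1) (fun w => u w ^+ 2) hu.1 _ (L2_int2 P hu)).
  exact: (finite_measure_integrable_cst P 1 measurableT).
move=> w; rewrite normr1 (ger0_norm (sqr_ge0 (u w))).
rewrite -(real_normK (num_real (u w))).
have := normr_ge0 (u w); have := sqr_ge0 (`|u w| - 1); nra.
Qed.

Lemma ipDD {a b : Om -> R} : L2 P a -> L2 P b ->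
  ip P (fun w => a w + b w) (fun w => a w + b w) = ip P a a + 2 * ip P a b + ip P b b.
Proof.
move=> ha hb; rewrite ipDl ?ipDr //; try by l2.
rewrite [ip P b a]ipC; ring.
Qed.

Lemma polar {a b : Om -> R} : L2 P a -> L2 P b ->
  ip P a b = (ip P (fun w => a w + b w) (fun w => a w + b w)
             - ip P (fun w => a w - b w) (fun w => a w - b w)) / 4.
Proof. by move=> ha hb; rewrite ipDD // ipBB //; field. Qed.

Lemma meas_ip {dD : measure_display} {OmD : measurableType dD} (phi : OmD * Om -> R) :
  measurable_fun setT phi ->
  measurable_fun setT (fun v => ip P (fun w => phi (v, w)) (fun w => phi (v, w))).
Proof.
move=> mphi; rewrite /ip.
apply: (measurableT_comp (fine_measurable measurableT)).
apply: (measurable_fun_fubini_tonelli_F (m2 := P) (fun p => (phi p * phi p)%:E)).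
  by apply: mEFin; exact: measurable_funM.
by move=> p; rewrite lee_fin -expr2 sqr_ge0.
Qed.

End misc.

Theorem corollary2p3
  (R : realType)
  (* test point (X, W, Y) ~ P_{X,W,Y}, on a probability space (Om, P) *)
  (d : measure_display) (Om : measurableType d) (P : probability Om R)
  (dX dW : measure_display) (TX : measurableType dX) (TW : measurableType dW)
  (X : Om -> TX) (W : Om -> TW) (Y : Om -> R)
  (mX : measurable_fun setT X) (mW : measurable_fun setT W)
  (mY : measurable_fun setT Y) (Y2 : sq_integrable P Y)
  (n m : nat) (n_ge1 : (1 <= n)%N) (m_ge1 : (1 <= m)%N)
  (lam : R) (lam_ge0 : 0 <= lam)
  (* training data, on a probability space (OmD, Q) (independent of the test point) *)
  (dD : measure_display) (OmD : measurableType dD) (Q : probability OmD R)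
  (ZL : 'I_n -> OmD -> TX * TW) (YL : 'I_n -> OmD -> R)
  (ZU : 'I_m -> OmD -> TX * TW)
  (mZL : forall i, measurable_fun setT (ZL i))
  (mYL : forall i, measurable_fun setT (YL i))
  (mZU : forall j, measurable_fun setT (ZU j))
  (indep : mutually_indep Q (fun k : 'I_n + 'I_m =>
      match k with
      | inl i => events_of (fun v => (ZL i v, YL i v))
      | inr j => events_of (ZU j)
      end))
  (lawL : forall i, same_law Q P (fun v => (ZL i v, YL i v))
                                  (fun w => ((X w, W w), Y w)))
  (lawU : forall j, same_law Q P (ZU j) (fun w => (X w, W w)))
  (* the classes F subset L2(P_X), G subset L2(P_Z) *)
  (F : set (TX -> R)) (G : set (TX * TW -> R))
  (F0 : F !=set0) (G0 : G !=set0)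
  (FL2 : subset_L2 P X F) (GL2 : subset_L2 P (fun w => (X w, W w)) G)
  (Fcl : closed_L2 P X F) (Gcl : closed_L2 P (fun w => (X w, W w)) G)
  (Fcvx : convex_L2 P X F) (Gcvx : convex_L2 P (fun w => (X w, W w)) G)
  (* a minimizer (fstar, gstar) of L(.,.;lam) over F x G *)
  (fstar : TX -> R) (gstar : TX * TW -> R) (Ffstar : F fstar) (Ggstar : G gstar)
  (minimizer : forall f g, F f -> G g ->
      (loss P X W Y n m lam fstar gstar <= loss P X W Y n m lam f g)%E)
  (* mu = E[Y | X], eta = E[Y | Z], mu in F, mu in G, eta in G *)
  (mu : TX -> R) (eta : TX * TW -> R)
  (mu_ce : is_cond_exp P X Y mu) (eta_ce : is_cond_exp P (fun w => (X w, W w)) Y eta)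
  (muF : L2mem P X F mu) (muG : L2mem P (fun w => (X w, W w)) G (fun z => mu z.1))
  (etaG : L2mem P (fun w => (X w, W w)) G eta)
  (* the estimator (fhat, ghat), a function of the data *)
  (Fhat : ('I_n -> (TX * TW) * R) * ('I_m -> TX * TW) -> TX -> R)
  (Ghat : ('I_n -> (TX * TW) * R) * ('I_m -> TX * TW) -> TX * TW -> R) :
  let data := fun v : OmD => (fun i => (ZL i v, YL i v), fun j => ZU j v) in
  let fhat := fun v => Fhat (data v) in
  let ghat := fun v => Ghat (data v) in
  (forall v, F (fhat v)) -> (forall v, G (ghat v)) ->
  measurable_fun setT (fun p : OmD * TX => fhat p.1 p.2) ->
  measurable_fun setT (fun p : OmD * (TX * TW) => ghat p.1 p.2) ->
  let ef := fun v x => fstar x - fhat v x in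
  let eg := fun v z => gstar z - ghat v z in
  let rho := corr_score
     (\int[Q]_v \int[P]_w (ef v (X w) * eg v (X w, W w))%:E)
     (\int[Q]_v \int[P]_w (ef v (X w) ^+ 2)%:E)
     (\int[Q]_v \int[P]_w (eg v (X w, W w) ^+ 2)%:E) in
  let gam := gamma_nml n m lam rho in
  n%:R / (n + m)%N%:R <= gam /\
  (\int[Q]_v \int[P]_w ((fhat v (X w) - mu (X w)) ^+ 2)%:E
   <= (\int[Q]_v (loss P X W Y n m lam (fhat v) (ghat v)
                  - loss P X W Y n m lam fstar gstar)) * (gam^-1)%:E)%E.

Proof.
move=> data fhat ghat Fh Gh mfh mgh ef eg rho gam.
pose Nr : R := (n + m)%N%:R.
pose c1 := n%:R / Nr. pose c2 := m%:R / Nr. pose c3 := lam * (n%:R / Nr).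
have hY : L2 P Y by split.
have mZ : measurable_fun setT (fun w => (X w, W w)) := measurable_fun_pair mX mW.
have LF f : F f -> L2 P (fun w => f (X w)).
  by move=> Ff; have [mf sf] := FL2 f Ff; split => //; exact: measurableT_comp.
have LG g : G g -> L2 P (fun w => g (X w, W w)).
  by move=> Gg; have [mg sg] := GL2 g Gg; split => //; exact: measurableT_comp.
have lossE f g : F f -> G g -> loss P X W Y n m lam f g =
    (lreal P Y c1 c2 c3 (fun w => f (X w)) (fun w => g (X w, W w)))%:E.
  move=> Ff Gg; have hf := LF f Ff; have hg := LG g Gg.
  rewrite /loss /lreal /=.
  under eq_integral do rewrite expr2.
  under [X in (_ + _ * X + _)%E]eq_integral do rewrite expr2.
  under [X in (_ + _ + _ * X)%E]eq_integral do rewrite expr2.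
  rewrite !ipE; try by l2.
have Nr0 : 0 < Nr by rewrite ltr0n addn_gt0 n_ge1.
have np : 0 < n%:R :> R by rewrite ltr0n.
have mp : 0 < m%:R :> R by rewrite ltr0n.
have sp : 0 < m%:R + n%:R * lam by rewrite ltr_wpDr // mulr_ge0 // ltW.
pose M := fun w => mu (X w).
pose E := fun w => eta (X w, W w).
have [mmu imu ceX] := mu_ce.
have [meta ieta ceZ] := eta_ce.
have mM : measurable_fun setT M by exact: measurableT_comp.
have mE : measurable_fun setT E by exact: measurableT_comp.
have [f1 Ff1 ae1] := muF.
have [g1 Gg1 aeg1] := muG.
have [g2 Gg2 ae2] := etaG.
have hM : L2 P M := L2_ae P (LF f1 Ff1) mM ae1.
have hE : L2 P E := L2_ae P (LG g2 Gg2) mE ae2.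
pose t := m%:R / (m%:R + n%:R * lam).
have t01 : 0 <= t <= 1.
  apply/andP; split; first by rewrite divr_ge0 // ltW.
  by rewrite ler_pdivrMr // mul1r lerDl mulr_ge0 // ltW.
have [g3 Gg3 ae3] := Gcvx g1 g2 t Gg1 Gg2 t01.
pose F1 := fun w => f1 (X w). pose G3 := fun w => g3 (X w, W w).
have hF1 : L2 P F1 := LF f1 Ff1.
have hG3 : L2 P G3 := LG g3 Gg3.
have rF1 h : L2 P h -> ip P F1 h = ip P M h.
  by move=> hh; apply: ip_ae => //.
have rG3 h : L2 P h -> ip P G3 h = t * ip P M h + (1 - t) * ip P E h.
  move=> hh; rewrite -ipZl // -[X in _ + X](ipZl) // -ipDl //; try by l2.
  apply: ip_ae => //; try by l2.
  apply: filterS3 ae3 aeg1 ae2 => w h3 h1 h2.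
  by rewrite /G3 /M /E h3 h1 h2.
have iY := L2_integrable P hY.
have oX (h0 : TX -> R) : measurable_fun setT h0 -> L2 P (fun w => h0 (X w)) ->
    ip P Y (fun w => h0 (X w)) = ip P M (fun w => h0 (X w)).
  move=> mh hh; rewrite /ip; congr fine.
  exact: (ortho P X mX Y mu mY iY mu_ce h0 mh (L2_intM P hY hh) (L2_intM P hM hh)).
have oZ (k0 : TX * TW -> R) : measurable_fun setT k0 -> L2 P (fun w => k0 (X w, W w)) ->
    ip P Y (fun w => k0 (X w, W w)) = ip P E (fun w => k0 (X w, W w)).
  move=> mk hk; rewrite /ip; congr fine.
  exact: (ortho P (fun w => (X w, W w)) mZ Y eta mY iY eta_ce k0 mk (L2_intM P hY hk) (L2_intM P hE hk)).
have oXE (h0 : TX -> R) : measurable_fun setT h0 -> L2 P (fun w => h0 (X w)) ->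
    ip P E (fun w => h0 (X w)) = ip P M (fun w => h0 (X w)).
  move=> mh hh; rewrite -(oX h0) //.
  by rewrite (oZ (fun z => h0 z.1)) //; exact: measurableT_comp.
pose Fs := fun w => fstar (X w). pose Gs := fun w => gstar (X w, W w).
have hFs : L2 P Fs := LF _ Ffstar.
have hGs : L2 P Gs := LG _ Ggstar.
have ht : c2 * (1 - t) = c3 * t.
  rewrite /c2 /c3 /t; field.
  by rewrite (lt0r_neq0 sp) -natrD (lt0r_neq0 Nr0).
have min1 : lreal P Y c1 c2 c3 Fs Gs <= lreal P Y c1 c2 c3 F1 G3.
  by have := minimizer f1 g3 Ff1 Gg3; rewrite (lossE _ _ Ffstar Ggstar) (lossE _ _ Ff1 Gg3) lee_fin.
have mfs1 : measurable_fun setT (fun x => fstar x - f1 x).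
  by apply: measurable_funB; [exact: (FL2 _ Ffstar).1 | exact: (FL2 _ Ff1).1].
have mgs3 : measurable_fun setT (fun z => gstar z - g3 z).
  by apply: measurable_funB; [exact: (GL2 _ Ggstar).1 | exact: (GL2 _ Gg3).1].
have ha : L2 P (fun w => Fs w - F1 w) by l2.
have hb : L2 P (fun w => Gs w - G3 w) by l2.
have Dz := D_zero P Y c1 c2 c3 t ha hb hM hE rF1 rG3
  (oX _ mfs1 ha) (oXE _ mfs1 ha) (oZ _ mgs3 hb) ht.
have tay1 := taylor P Y hY c1 c2 c3 hF1 hG3 hFs hGs.
rewrite Dz mulr0 addr0 in tay1.
have c1p : 0 < c1 by rewrite divr_gt0.
have c2p : 0 < c2 by rewrite divr_gt0.
have c3p : 0 <= c3 by rewrite mulr_ge0 // divr_ge0 // ltW.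
have [na nb] : ip P (fun w => Fs w - F1 w) (fun w => Fs w - F1 w) = 0 /\
    ip P (fun w => Gs w - G3 w) (fun w => Gs w - G3 w) = 0.
  by apply: (Q_zero P c1 c2 c3 ha hb c1p c2p c3p); rewrite -tay1 subr_le0.
have rFs h : L2 P h -> ip P Fs h = ip P M h.
  move=> hh; rewrite -(rF1 h hh); apply/eqP; rewrite -subr_eq0 -ipBl //.
  by rewrite (ip_null P h ha hh na).
have rGs h : L2 P h -> ip P Gs h = t * ip P M h + (1 - t) * ip P E h.
  move=> hh; rewrite -(rG3 h hh); apply/eqP; rewrite -subr_eq0 -ipBl //.
  by rewrite (ip_null P h hb hh nb).
pose fv v := fun w => fhat v (X w).
pose gv v := fun w => ghat v (X w, W w).
have hfv v : L2 P (fv v) := LF _ (Fh v).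
have hgv v : L2 P (gv v) := LG _ (Gh v).
pose A v := ip P (fun w => Fs w - fv v w) (fun w => Fs w - fv v w).
pose B v := ip P (fun w => Gs w - gv v w) (fun w => Gs w - gv v w).
pose C v := ip P (fun w => Fs w - fv v w) (fun w => Gs w - gv v w).
pose k := (m%:R + n%:R * lam) / (n + m)%N%:R.
pose bb : R := m%:R / (n + m)%N%:R.
have K1 v : lreal P Y c1 c2 c3 (fv v) (gv v) - lreal P Y c1 c2 c3 Fs Gs =
    A v + k * B v - 2 * (bb * C v).
  have hf := hfv v; have hg := hgv v.
  have mfa : measurable_fun setT (fun x => fhat v x - fstar x).
    by apply: measurable_funB; [exact: (FL2 _ (Fh v)).1 | exact: (FL2 _ Ffstar).1].
  have mgb : measurable_fun setT (fun z => ghat v z - gstar z).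
    by apply: measurable_funB; [exact: (GL2 _ (Gh v)).1 | exact: (GL2 _ Ggstar).1].
  have ha' : L2 P (fun w => fv v w - Fs w) by l2.
  have hb' : L2 P (fun w => gv v w - Gs w) by l2.
  have Dz' := D_zero P Y c1 c2 c3 t ha' hb' hM hE rFs rGs
    (oX _ mfa ha') (oXE _ mfa ha') (oZ _ mgb hb') ht.
  have tay := taylor P Y hY c1 c2 c3 hFs hGs hf hg.
  rewrite Dz' mulr0 addr0 in tay; rewrite tay.
  rewrite (ipBB P (a := fun w => gv v w - Gs w) (b := fun w => fv v w - Fs w)) //.
  rewrite (ip_ext P (u1 := fun w => fv v w - Fs w) (v1 := fun w => fv v w - Fs w)
    (u2 := fun w => Fs w - fv v w) (v2 := fun w => Fs w - fv v w)); last by move=> w; ring.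
  rewrite (ip_ext P (u1 := fun w => gv v w - Gs w) (v1 := fun w => gv v w - Gs w)
    (u2 := fun w => Gs w - gv v w) (v2 := fun w => Gs w - gv v w)); last by move=> w; ring.
  rewrite (ip_ext P (u1 := fun w => gv v w - Gs w) (v1 := fun w => fv v w - Fs w)
    (u2 := fun w => Fs w - fv v w) (v2 := fun w => Gs w - gv v w)); last by move=> w; ring.
  rewrite /A /B /C /k /bb /c1 /c2 /c3 /Nr; field.
  by rewrite -natrD (lt0r_neq0 Nr0).
have K2 v : ip P (fun w => fv v w - M w) (fun w => fv v w - M w) = A v.
  have hf := hfv v.
  rewrite /A !ipBB // (rFs Fs) // (ipC P M Fs) (rFs M) // (rFs (fv v)) //.
  by rewrite (ipC P (fv v) M); ring.
have A0 v : 0 <= A v by exact: ip_ge0.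
have B0 v : 0 <= B v by exact: ip_ge0.
have hC v : C v ^+ 2 <= A v * B v.
  by apply: CS; have := hfv v; have := hgv v; move=> *; l2.
have mfhX : measurable_fun setT (fun p : OmD * Om => fhat p.1 (X p.2)).
  apply: (measurableT_comp (f := fun p : OmD * TX => fhat p.1 p.2)
      (g := fun p : OmD * Om => (p.1, X p.2))) => //.
  apply: measurable_fun_pair; first exact: measurable_fst.
  by apply: measurableT_comp => //; exact: measurable_snd.
have mghZ : measurable_fun setT (fun p : OmD * Om => ghat p.1 (X p.2, W p.2)).
  apply: (measurableT_comp (f := fun p : OmD * (TX * TW) => ghat p.1 p.2)
      (g := fun p : OmD * Om => (p.1, (X p.2, W p.2)))) => //.
  apply: measurable_fun_pair; first exact: measurable_fst.
  exact: (measurableT_comp mZ measurable_snd).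
have mfsX : measurable_fun setT (fun p : OmD * Om => fstar (X p.2)).
  apply: (measurableT_comp (f := fstar) (g := fun p : OmD * Om => X p.2)).
    exact: (FL2 _ Ffstar).1.
  by apply: measurableT_comp => //; exact: measurable_snd.
have mgsZ : measurable_fun setT (fun p : OmD * Om => gstar (X p.2, W p.2)).
  apply: (measurableT_comp (f := gstar) (g := fun p : OmD * Om => (X p.2, W p.2))).
    exact: (GL2 _ Ggstar).1.
  exact: (measurableT_comp mZ measurable_snd).
have mA : measurable_fun setT A.
  exact: (meas_ip P (fun p => fstar (X p.2) - fhat p.1 (X p.2)) (measurable_funB mfsX mfhX)).
have mB : measurable_fun setT B.
  exact: (meas_ip P (fun p => gstar (X p.2, W p.2) - ghat p.1 (X p.2, W p.2)) (measurable_funB mgsZ mghZ)).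
have mC : measurable_fun setT C.
  have -> : C = fun v =>
      (ip P (fun w => (Fs w - fv v w) + (Gs w - gv v w)) (fun w => (Fs w - fv v w) + (Gs w - gv v w))
     - ip P (fun w => (Fs w - fv v w) - (Gs w - gv v w)) (fun w => (Fs w - fv v w) - (Gs w - gv v w))) / 4.
    apply/funext => v; have hf := hfv v; have hg := hgv v.
    by rewrite /C polar //; l2.
  apply: measurable_funM => //; apply: measurable_funB.
    exact: (meas_ip P (fun p => (fstar (X p.2) - fhat p.1 (X p.2)) + (gstar (X p.2, W p.2) - ghat p.1 (X p.2, W p.2)))
      (measurable_funD (measurable_funB mfsX mfhX) (measurable_funB mgsZ mghZ))).
  exact: (meas_ip P (fun p => (fstar (X p.2) - fhat p.1 (X p.2)) - (gstar (X p.2, W p.2) - ghat p.1 (X p.2, W p.2)))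
      (measurable_funB (measurable_funB mfsX mfhX) (measurable_funB mgsZ mghZ))).
have eL : (\int[Q]_v \int[P]_w ((fhat v (X w) - mu (X w)) ^+ 2)%:E = \int[Q]_v (A v)%:E)%E.
  apply: eq_integral => v _; have hf := hfv v.
  under eq_integral do rewrite expr2.
  rewrite -K2 -ipE //; by l2.
have eR : (\int[Q]_v (loss P X W Y n m lam (fhat v) (ghat v) - loss P X W Y n m lam fstar gstar)
    = \int[Q]_v (A v + k * B v - 2 * (bb * C v))%:E)%E.
  apply: eq_integral => v _.
  rewrite (lossE _ _ (Fh v) (Gh v)) (lossE _ _ Ffstar Ggstar) -EFinB.
  by congr EFin; exact: K1 v.
have eA : (\int[Q]_v \int[P]_w (ef v (X w) ^+ 2)%:E = \int[Q]_v (A v)%:E)%E.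
  apply: eq_integral => v _; have hf := hfv v.
  under eq_integral do rewrite expr2.
  rewrite /A -ipE //; by l2.
have eB : (\int[Q]_v \int[P]_w (eg v (X w, W w) ^+ 2)%:E = \int[Q]_v (B v)%:E)%E.
  apply: eq_integral => v _; have hg := hgv v.
  under eq_integral do rewrite expr2.
  rewrite /B -ipE //; by l2.
have eC : (\int[Q]_v \int[P]_w (ef v (X w) * eg v (X w, W w))%:E = \int[Q]_v (C v)%:E)%E.
  apply: eq_integral => v _; have hf := hfv v; have hg := hgv v.
  rewrite /C -ipE //; by l2.
rewrite /gam /rho eA eB eC eL eR.
exact: (outer _ _ _ Q A B C n m lam n_ge1 m_ge1 lam_ge0 mA mB mC A0 B0 hC).
Qed.
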